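(* Let $p_A,p_D,p_I\in(0,1)$, $q_A>0$, $q_D>0$, $q_I\ge0$, and set $r_A=p_A/q_A$, $r_D=p_D/q_D$, and (whenever $q_I<\frac12$) $\varepsilon=\Bigl(\frac{1}{r_D}\bigl(\frac{1}{\sqrt{1/2+q_I}}-1\bigr)\Bigr)^{-1/2}$. Let $J_A,J_D,J_I$ be the functions defined in the context, and consider the two three-player games on strategy sets $\alpha\in(0,1]$, $\beta\in(0,1]$, $\gamma\in[0,1]$: Game C (unknown malicious insider): the attacker minimizes $J_A(\alpha,\beta,\gamma)$ over $\alpha$, the defender minimizes $J_D(\alpha,\beta,0)$ over $\beta$, the insider maximizes $J_I(\alpha,\beta,\gamma)$ over $\gamma$; Game D (unknown inadvertent insider): the attacker minimizes $J_A(\alpha,\beta,0)$ over $\alpha$, the defender minimizes $J_D(\alpha,\beta,0)$ over $\beta$, the insider maximizes $J_I(\alpha,\beta,\gamma)$ over $\gamma$. A triple $(\alpha^*,\beta^*,\gamma^* )$ is a Nash equilibrium of a game if $\alpha^*$ minimizes the attacker's objective with $(\beta^*,\gamma^* )$ fixed, $\beta^*$ minimizes the defender's objective with $(\alpha^*,\gamma^* )$ fixed, and $\gamma^*$ maximizes the insider's objective with $(\alpha^*,\beta^* )$ fixed. Then the following hold. For Game C: (C1) if $\frac{r_A}{p_A}=r_D\le1$ and $q_I\le\bigl(\frac{1}{r_A/p_A+1}\bigr)^2-\frac12$, then for every $\beta^*\in[\varepsilon,1]$ the triple $\bigl(\frac{r_D}{\beta^*},\beta^*,1\bigr)$ is a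 Nash equilibrium; (C2) if $\frac{r_A}{p_A}\le1$, $\frac{r_A}{p_A}<r_D$ and $q_I\le\bigl(\frac{1}{r_A/p_A+1}\bigr)^2-\frac12$, then $\bigl(\frac{r_A}{p_A},1,1\bigr)$ is a Nash equilibrium. For Game D: (D1) if $r_A=r_D\le1$ and $q_I\le\bigl(\frac{1}{r_A+1}\bigr)^2-\frac12$, then for every $\beta^*\in[\varepsilon,1]$ the triple $\bigl(\frac{r_D}{\beta^*},\beta^*,1\bigr)$ is a Nash equilibrium; (D2) if $r_A\le1$, $r_A<r_D$ and $q_I\le\bigl(\frac{1}{r_A+1}\bigr)^2-\frac12$, then $(r_A,1,1)$ is a Nash equilibrium. For each of Game C and Game D: (i) if $r_A=r_D\le1$ and $q_I>\bigl(\frac1{r_A+1}\bigr)^2-\frac12$, then $\bigl(\frac{r_D}{\beta^*},\beta^*,0\bigr)$ is a Nash equilibrium for every $\beta^*\in[r_D,1]$; (ii) if $r_A=r_D\le1$ and $q_I\le\bigl(\frac1{r_A+1}\bigr)^2-\frac12$, then $\bigl(\frac{r_D}{\beta^*},\beta^*,0\bigr)$ is a Nash equilibrium for every $\beta^*\in[r_D,\varepsilon]$; (iii) if $r_A\le1$, $r_A<r_D$ and $q_I\ge\bigl(\frac1{r_A+1}\bigr)^2-\frac12$, then $(r_A,1,0)$ is a Nash equilibrium; (iv) if $r_D\le1$ and $r_D<r_A$, then $(1,r_D,0)$ is a Nash equilibrium; (v) if $r_A>1$ and $r_D>1$, then $(1,1,0)$ is a Nash equilibrium.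
   Context: For $\alpha,\beta\in(0,1]$ let $x(t)=\frac{\alpha}{\alpha+\beta}\bigl(1-e^{-(\alpha+\beta)t}\bigr)$, the solution of $\dot x=\alpha(1-x)-\beta x$, $x(0)=0$ (fraction of compromised resources). For $\gamma\in[0,1]$ define $J_A(\alpha,\beta,\gamma)=\lim_{T\to\infty}\frac1T\int_0^T\bigl[p_A(1-\gamma)^2+q_A\alpha^2+\gamma^2\bigr](1-x(t))^2\,dt$, $J_D(\alpha,\beta,\gamma)=\lim_{T\to\infty}\frac1T\int_0^T\bigl[p_D(1-\gamma)^2+q_D\beta^2+\gamma^2\bigr]x(t)^2\,dt$, $J_I(\alpha,\beta,\gamma)=\lim_{T\to\infty}\frac1T\int_0^T\bigl[(p_I+\gamma^2)(1-x(t))^2-(q_I\gamma+\tfrac12\gamma^2)\bigr]dt$. Here $\alpha$ is the attacker's strategy, $\beta$ the defender's, $\gamma$ the insider's. The paper phrases the conclusion as these equilibrium defense strategies $\beta^*$ being ''acceptable solutions'' to the defense problem with unknown insider threats. *)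

(* Defs.v *)
From Stdlib Require Import Reals.
From Coquelicot Require Import Coquelicot.
Open Scope R_scope.

(* fraction of compromised resources: solution of x' = a(1-x) - b x, x(0)=0 *)
Definition xsol (a b t : R) : R := a / (a + b) * (1 - exp (- (a + b) * t)).

Definition long_run_avg (f : R -> R) : R :=
  real (Lim (fun T => / T * RInt f 0 T) p_infty).

Definition J_A (pA qA a b g : R) : R :=
  long_run_avg (fun t => (pA * (1 - g) ^ 2 + qA * a ^ 2 + g ^ 2) * (1 - xsol a b t) ^ 2).

Definition J_D (pD qD a b g : R) : R :=
  long_run_avg (fun t => (pD * (1 - g) ^ 2 + qD * b ^ 2 + g ^ 2) * (xsol a b t) ^ 2).

Definition J_I (pI qI a b g : R) : R :=
  long_run_avg (fun t => (pI + g ^ 2) * (1 - xsol a b t) ^ 2 - (qI * g + / 2 * g ^ 2)).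

Definition NashEq (fA fD fI : R -> R -> R -> R) (a b g : R) : Prop :=
  (0 < a <= 1) /\ (0 < b <= 1) /\ (0 <= g <= 1) /\
  (forall a', 0 < a' <= 1 -> fA a b g <= fA a' b g) /\
  (forall b', 0 < b' <= 1 -> fD a b g <= fD a b' g) /\
  (forall g', 0 <= g' <= 1 -> fI a b g' <= fI a b g).

Definition GameC_NE (pA qA pD qD pI qI : R) : R -> R -> R -> Prop :=
  NashEq (fun a b g => J_A pA qA a b g)
         (fun a b g => J_D pD qD a b 0)
         (fun a b g => J_I pI qI a b g).

Definition GameD_NE (pA qA pD qD pI qI : R) : R -> R -> R -> Prop :=
  NashEq (fun a b g => J_A pA qA a b 0)
         (fun a b g => J_D pD qD a b 0)
         (fun a b g => J_I pI qI a b g).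

Definition eps_thr (rD qI : R) : R :=
  / sqrt (/ rD * (/ sqrt (/ 2 + qI) - 1)).

(* Main.v *)
Require Import Defs.
From Stdlib Require Import Reals Lra Psatz FunctionalExtensionality.
From Coquelicot Require Import Coquelicot.
Open Scope R_scope.
Lemma limE (k : R) : 0 < k -> is_lim (fun T => exp (-k*T)) p_infty 0.
Proof.
  intros hk.
  apply (is_lim_comp (fun y => exp y) (fun T => -k*T) p_infty 0 m_infty).
  - apply is_lim_exp_m.
  - replace m_infty with (Rbar_mult (-k) p_infty).
    + apply is_lim_scal_l, is_lim_id.
    + simpl. unfold Rbar_mult. simpl. case Rle_dec; intro; [|reflexivity]. case Rle_lt_or_eq_dec; intro; lra.
  - exists 0. intros y _ H. discriminate.
Qed.

Lemma scal' f a x (l : R) : is_lim f x l -> is_lim (fun y => a * f y) x (a * l).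
Proof. intro H. exact (is_lim_scal_l f a x l H). Qed.
Lemma sq' f x (l : R) : is_lim f x l -> is_lim (fun y => f y ^ 2) x (l ^ 2).
Proof. intro H. assert (H2 := is_lim_mult f f x l l H H I).
  apply (is_lim_ext (fun y => f y * f y)). intros; simpl; ring.
  replace (l^2) with (l*l) by ring. exact H2. Qed.

Lemma lra_lemma (P Q S k : R) (f : R -> R) : 0 < k ->
  (forall t, f t = P + Q * exp (-k*t) + S * exp (-k*t) ^ 2) -> long_run_avg f = P.
Proof.
  intros hk Hf.
  assert (f = fun t => P + Q * exp (-k*t) + S * exp (-k*t) ^ 2) by (apply functional_extensionality; exact Hf).
  subst f. clear Hf.
  set (F := fun t => P * t - Q / k * exp (-k*t) - S / (2*k) * exp (-k*t) ^ 2).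
  assert (HI : forall T, RInt (fun t => P + Q * exp (-k*t) + S * exp (-k*t) ^ 2) 0 T = F T - F 0).
  { intros T. apply is_RInt_unique.
    apply (is_RInt_derive F).
    - intros x _. unfold F. auto_derive; [auto|]. field. lra.
    - intros x _. apply (ex_derive_continuous (fun t => P + Q * exp (-k*t) + S * exp (-k*t) ^ 2)). auto_derive. auto. }
  unfold long_run_avg.
  assert (Hl : is_lim (fun T => / T * RInt (fun t => P + Q * exp (-k*t) + S * exp (-k*t) ^ 2) 0 T) p_infty P).
  { apply (is_lim_ext_loc (fun T => P + / T * (Q / k + S / (2*k) - Q / k * exp (-k*T) - S / (2*k) * exp (-k*T) ^ 2))).
    - exists 0. intros T HT. rewrite HI. unfold F. rewrite !Rmult_0_r, exp_0. field. lra.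
    - set (c := Q / k + S / (2*k) - Q / k * 0 - S / (2*k) * 0 ^ 2).
      assert (H0 : is_lim (fun T => / T * (Q / k + S / (2*k) - Q / k * exp (-k*T) - S / (2*k) * exp (-k*T) ^ 2)) p_infty (Rbar_mult 0 c)).
      { apply (is_lim_mult (fun T => / T)).
      + replace (Finite 0) with (Rbar_inv p_infty) by reflexivity. apply is_lim_inv. apply is_lim_id. discriminate.
      + unfold c. apply is_lim_minus'. apply is_lim_minus'. apply is_lim_const.
        apply scal'. apply limE; auto.
        apply scal'. apply sq'. apply limE; auto.
      + simpl. auto. }
      simpl in H0. rewrite Rmult_0_l in H0.
      assert (H1 := is_lim_plus' _ _ p_infty P 0 (is_lim_const P p_infty) H0).
      rewrite Rplus_0_r in H1. exact H1. }
  rewrite (is_lim_unique _ _ _ Hl). reflexivity.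
Qed.

Lemma JA_eq pA qA a b g : 0 < a -> 0 < b ->
  J_A pA qA a b g = (pA*(1-g)^2 + qA*a^2 + g^2) * (b/(a+b))^2.
Proof.
  intros ha hb. unfold J_A.
  set (c := pA*(1-g)^2 + qA*a^2 + g^2).
  apply (lra_lemma _ (2*c*(b/(a+b))*(a/(a+b))) (c*(a/(a+b))^2) (a+b)); [lra|].
  intro t. unfold xsol. set (e := exp (- (a+b) * t)). field. lra.
Qed.

Lemma JD_eq pD qD a b g : 0 < a -> 0 < b ->
  J_D pD qD a b g = (pD*(1-g)^2 + qD*b^2 + g^2) * (a/(a+b))^2.
Proof.
  intros ha hb. unfold J_D.
  set (c := pD*(1-g)^2 + qD*b^2 + g^2).
  apply (lra_lemma _ (-2*c*(a/(a+b))^2) (c*(a/(a+b))^2) (a+b)); [lra|].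
  intro t. unfold xsol. set (e := exp (- (a+b) * t)). field. lra.
Qed.

Lemma JI_eq pI qI a b g : 0 < a -> 0 < b ->
  J_I pI qI a b g = (pI + g^2) * (b/(a+b))^2 - (qI * g + / 2 * g ^ 2).
Proof.
  intros ha hb. unfold J_I.
  set (c := pI + g^2).
  apply (lra_lemma _ (2*c*(b/(a+b))*(a/(a+b))) (c*(a/(a+b))^2) (a+b)); [lra|].
  intro t. unfold xsol. set (e := exp (- (a+b) * t)). field. lra.
Qed.

Lemma BR c q x y x' : 0 < q -> 0 < y -> 0 < x <= 1 -> 0 < x' <= 1 ->
  (x = 1 \/ c = q*x*y) -> c >= q*x*y ->
  (c + q*x^2)*(y/(x+y))^2 <= (c + q*x'^2)*(y/(x'+y))^2.
Proof.
  intros hq hy hx hx' hor hc.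
  set (d := c - q*x*y).
  assert (E : (c + q*x'^2)*(y/(x'+y))^2 - (c + q*x^2)*(y/(x+y))^2 =
     y^2 * (q*(x+y)*y*(x-x')^2 + d*((x+y)^2 - (x'+y)^2)) / ((x+y)^2*(x'+y)^2)).
  { unfold d. field. lra. }
  assert (HN : 0 <= q*(x+y)*y*(x-x')^2 + d*((x+y)^2 - (x'+y)^2)).
  { assert (0 <= q*(x+y)*y*(x-x')^2).
    { apply Rmult_le_pos; [|apply pow2_ge_0]. apply Rmult_le_pos; [|lra]. apply Rmult_le_pos; lra. }
    destruct hor as [-> | hor].
    - assert (0 <= d) by (unfold d; lra).
      assert (0 <= (1+y)^2 - (x'+y)^2) by nra. nra.
    - assert (d = 0) by (unfold d; lra). rewrite H0. lra. }
  assert (0 <= y^2 * (q*(x+y)*y*(x-x')^2 + d*((x+y)^2 - (x'+y)^2)) / ((x+y)^2*(x'+y)^2)).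
  { apply Rdiv_le_0_compat. apply Rmult_le_pos; [apply pow2_ge_0|exact HN].
    apply Rmult_lt_0_compat; apply pow_lt; lra. }
  lra.
Qed.

Lemma ins0 pI qI y g' : 0 <= qI -> qI >= y^2 - /2 -> 0 <= g' <= 1 ->
  (pI + g'^2)*y^2 - (qI*g' + /2*g'^2) <= (pI + 0^2)*y^2 - (qI*0 + /2*0^2).
Proof.
  intros h1 h2 h3. set (m := y^2 - /2) in *.
  assert (g'^2*m - qI*g' <= 0).
  { destruct (Rle_dec 0 m).
    - assert (0 <= g'*(1-g')*m) by (apply Rmult_le_pos; [apply Rmult_le_pos|]; lra).
      assert (0 <= g'*(qI - m)) by (apply Rmult_le_pos; lra).
      assert (g'^2*m - qI*g' = -(g'*(1-g')*m) - g'*(qI-m)) by ring. lra.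
    - assert (0 <= g'^2*(-m)) by (apply Rmult_le_pos; [apply pow2_ge_0|lra]).
      assert (0 <= g'*qI) by (apply Rmult_le_pos; lra).
      assert (g'^2*m = -(g'^2*(-m))) by ring. assert (qI*g' = g'*qI) by ring. lra. }
  unfold m in H. nra.
Qed.

Lemma ins1 pI qI y g' : 0 <= qI -> qI <= y^2 - /2 -> 0 <= g' <= 1 ->
  (pI + g'^2)*y^2 - (qI*g' + /2*g'^2) <= (pI + 1^2)*y^2 - (qI*1 + /2*1^2).
Proof.
  intros h1 h2 h3. set (m := y^2 - /2) in *.
  assert (0 <= m*g') by (apply Rmult_le_pos; lra).
  assert (0 <= (1-g')*(m*(1+g') - qI)) by (apply Rmult_le_pos; lra).
  unfold m in *.
  assert ((pI + 1^2)*y^2 - (qI*1 + /2*1^2) - ((pI + g'^2)*y^2 - (qI*g' + /2*g'^2)) = (1-g')*((y^2 - /2)*(1+g') - qI)) by field.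
  lra.
Qed.

Lemma att pA qA a b g c a' : 0 < qA -> 0 < b -> 0 < a <= 1 -> 0 < a' <= 1 ->
  c = pA*(1-g)^2 + g^2 -> (a = 1 \/ c = qA*a*b) -> c >= qA*a*b ->
  J_A pA qA a b g <= J_A pA qA a' b g.
Proof.
  intros. rewrite !JA_eq by lra.
  replace (pA * (1 - g) ^ 2 + qA * a ^ 2 + g ^ 2) with (c + qA*a^2) by (subst; ring).
  replace (pA * (1 - g) ^ 2 + qA * a' ^ 2 + g ^ 2) with (c + qA*a'^2) by (subst; ring).
  apply BR; auto.
Qed.

Lemma dfn pD qD a b b' : 0 < qD -> 0 < a -> 0 < b <= 1 -> 0 < b' <= 1 ->
  (b = 1 \/ pD = qD*b*a) -> pD >= qD*b*a ->
  J_D pD qD a b 0 <= J_D pD qD a b' 0.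
Proof.
  intros. rewrite !JD_eq by lra.
  replace (pD * (1 - 0) ^ 2 + qD * b ^ 2 + 0 ^ 2) with (pD + qD*b^2) by ring.
  replace (pD * (1 - 0) ^ 2 + qD * b' ^ 2 + 0 ^ 2) with (pD + qD*b'^2) by ring.
  replace (a+b) with (b+a) by ring. replace (a+b') with (b'+a) by ring.
  apply BR; auto.
Qed.

Section S.
Variables (pA pD pI qA qD qI : R)
  (HpA : 0 < pA < 1) (HpD : 0 < pD < 1) (HpI : 0 < pI < 1)
  (HqA : 0 < qA) (HqD : 0 < qD) (HqI : 0 <= qI).

Lemma NE0 a b : 0 < a <= 1 -> 0 < b <= 1 ->
  pA >= qA*a*b -> (a = 1 \/ pA = qA*a*b) ->
  pD >= qD*b*a -> (b = 1 \/ pD = qD*b*a) ->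
  qI >= (b/(a+b))^2 - /2 ->
  GameC_NE pA qA pD qD pI qI a b 0 /\ GameD_NE pA qA pD qD pI qI a b 0.
Proof.
  intros ha hb h1 h2 h3 h4 h5.
  split; (split; [lra|split; [lra|split;[lra|split;[|split]]]]).
  - intros a' ha'. apply (att _ _ _ _ _ pA); auto; try lra; ring.
  - intros b' hb'. simpl. apply dfn; auto; lra.
  - intros g' hg'. simpl. rewrite !JI_eq by lra. apply ins0; auto.
  - intros a' ha'. apply (att _ _ _ _ _ pA); auto; try lra; ring.
  - intros b' hb'. simpl. apply dfn; auto; lra.
  - intros g' hg'. simpl. rewrite !JI_eq by lra. apply ins0; auto.
Qed.

Lemma NEC1 a b : 0 < a <= 1 -> 0 < b <= 1 ->
  1 >= qA*a*b -> (a = 1 \/ 1 = qA*a*b) ->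
  pD >= qD*b*a -> (b = 1 \/ pD = qD*b*a) ->
  qI <= (b/(a+b))^2 - /2 ->
  GameC_NE pA qA pD qD pI qI a b 1.
Proof.
  intros ha hb h1 h2 h3 h4 h5.
  split; [lra|split; [lra|split;[lra|split;[|split]]]].
  - intros a' ha'. apply (att _ _ _ _ _ 1); auto; try lra; ring.
  - intros b' hb'. simpl. apply dfn; auto; lra.
  - intros g' hg'. simpl. rewrite !JI_eq by lra. apply ins1; auto.
Qed.

Lemma NED1 a b : 0 < a <= 1 -> 0 < b <= 1 ->
  pA >= qA*a*b -> (a = 1 \/ pA = qA*a*b) ->
  pD >= qD*b*a -> (b = 1 \/ pD = qD*b*a) ->
  qI <= (b/(a+b))^2 - /2 ->
  GameD_NE pA qA pD qD pI qI a b 1.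
Proof.
  intros ha hb h1 h2 h3 h4 h5.
  split; [lra|split; [lra|split;[lra|split;[|split]]]].
  - intros a' ha'. apply (att _ _ _ _ _ pA); auto; try lra; ring.
  - intros b' hb'. simpl. apply dfn; auto; lra.
  - intros g' hg'. simpl. rewrite !JI_eq by lra. apply ins1; auto.
Qed.
End S.

Lemma eps_facts rD qI : 0 < rD -> 0 <= qI -> /2 + qI < 1 ->
  0 < sqrt (/2+qI) < 1 /\ (sqrt (/2+qI))^2 = /2+qI /\ 0 < eps_thr rD qI /\
  (eps_thr rD qI)^2 = rD * sqrt (/2+qI) / (1 - sqrt (/2+qI)).
Proof.
  intros hr hq hl.
  set (s := sqrt (/2+qI)).
  assert (hs2 : s^2 = /2+qI) by (unfold s; rewrite pow2_sqrt; lra).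
  assert (hs0 : 0 < s) by (unfold s; apply sqrt_lt_R0; lra).
  assert (hs1 : s < 1) by nra.
  set (u := / rD * (/ s - 1)).
  assert (hu : 0 < u).
  { unfold u. apply Rmult_lt_0_compat. apply Rinv_0_lt_compat; lra.
    assert (1 < / s). { rewrite <- Rinv_1. apply Rinv_lt_contravar; lra. } lra. }
  assert (hsq : 0 < sqrt u) by (apply sqrt_lt_R0; lra).
  unfold eps_thr. fold s. fold u.
  split; [lra|]. split; [lra|]. split. apply Rinv_0_lt_compat; lra.
  rewrite pow_inv. rewrite pow2_sqrt by lra. unfold u. field. split; lra.
Qed.

Lemma yform rD b : 0 < rD -> 0 < b -> b / (rD / b + b) = b^2 / (rD + b^2).
Proof. intros. field. split; [|lra]. nra. Qed.

Lemma y_le1 rD b : 0 < rD -> 0 < b <= 1 -> (b / (rD / b + b))^2 <= (/(rD+1))^2.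
Proof.
  intros hr hb. rewrite yform by lra.
  assert (E : /(rD+1) - b^2/(rD+b^2) = rD*(1-b^2)/((rD+1)*(rD+b^2))) by (field; nra).
  assert (0 <= rD*(1-b^2)/((rD+1)*(rD+b^2))).
  { apply Rdiv_le_0_compat. apply Rmult_le_pos; nra. nra. }
  assert (0 <= b^2/(rD+b^2)) by (apply Rdiv_le_0_compat; nra).
  apply pow_incr. lra.
Qed.

Lemma y_high rD qI b : 0 < rD -> 0 <= qI -> /2 + qI < 1 -> 0 < b -> b <= eps_thr rD qI ->
  (b / (rD / b + b))^2 - /2 <= qI.
Proof.
  intros hr hq hl hb he.
  destruct (eps_facts rD qI hr hq hl) as (hs & hs2 & he0 & he2).
  set (s := sqrt (/2+qI)) in *. set (e := eps_thr rD qI) in *.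
  assert (b^2 <= e^2) by (apply pow_incr; lra).
  assert (b^2*(1-s) <= rD*s).
  { rewrite he2 in H. apply (Rmult_le_compat_r (1-s)) in H; [|lra].
    replace (rD * s / (1 - s) * (1 - s)) with (rD*s) in H by (field; lra). exact H. }
  rewrite yform by lra.
  assert (E : s - b^2/(rD+b^2) = (rD*s - b^2*(1-s))/(rD+b^2)) by (field; nra).
  assert (0 <= (rD*s - b^2*(1-s))/(rD+b^2)) by (apply Rdiv_le_0_compat; nra).
  assert (0 <= b^2/(rD+b^2)) by (apply Rdiv_le_0_compat; nra).
  assert ((b^2/(rD+b^2))^2 <= s^2) by (apply pow_incr; lra).
  lra.
Qed.

Lemma y_low rD qI b : 0 < rD -> 0 <= qI -> /2 + qI < 1 -> 0 < b -> eps_thr rD qI <= b ->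
  qI <= (b / (rD / b + b))^2 - /2.
Proof.
  intros hr hq hl hb he.
  destruct (eps_facts rD qI hr hq hl) as (hs & hs2 & he0 & he2).
  set (s := sqrt (/2+qI)) in *. set (e := eps_thr rD qI) in *.
  assert (e^2 <= b^2) by (apply pow_incr; lra).
  assert (rD*s <= b^2*(1-s)).
  { rewrite he2 in H. apply (Rmult_le_compat_r (1-s)) in H; [|lra].
    replace (rD * s / (1 - s) * (1 - s)) with (rD*s) in H by (field; lra). exact H. }
  rewrite yform by lra.
  assert (E : b^2/(rD+b^2) - s = (b^2*(1-s) - rD*s)/(rD+b^2)) by (field; nra).
  assert (0 <= (b^2*(1-s) - rD*s)/(rD+b^2)) by (apply Rdiv_le_0_compat; nra).
  assert (s^2 <= (b^2/(rD+b^2))^2) by (apply pow_incr; lra).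
  lra.
Qed.

Lemma b_gt rD qI b : 0 < rD <= 1 -> 0 <= qI -> 0 < b -> qI <= (b / (rD / b + b))^2 - /2 -> rD <= b.
Proof.
  intros hr hq hb h. rewrite yform in h by lra.
  set (y := b^2/(rD+b^2)) in *.
  assert (hy : y * (rD + b^2) = b^2) by (unfold y; field; nra).
  assert (0 <= y) by (unfold y; apply Rdiv_le_0_compat; nra).
  assert (y > /2) by nra.
  assert (b^2 > rD) by nra.
  nra.
Qed.

Lemma eps_le1 rD qI : 0 < rD -> 0 <= qI -> qI <= (/(rD+1))^2 - /2 -> eps_thr rD qI <= 1.
Proof.
  intros hr hq h.
  assert (hi : 0 < /(rD+1) < 1).
  { split. apply Rinv_0_lt_compat; lra. rewrite <- Rinv_1. apply Rinv_lt_contravar; lra. }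
  assert (hl : /2 + qI < 1) by nra.
  destruct (eps_facts rD qI hr hq hl) as (hs & hs2 & he0 & he2).
  set (s := sqrt (/2+qI)) in *. set (e := eps_thr rD qI) in *.
  assert (s <= /(rD+1)) by nra.
  assert (s*(rD+1) <= 1).
  { apply (Rmult_le_compat_r (rD+1)) in H; [|lra]. rewrite Rinv_l in H; lra. }
  assert (e^2 <= 1).
  { rewrite he2. apply (Rmult_le_reg_r (1-s)); [lra|].
    replace (rD * s / (1 - s) * (1 - s)) with (rD*s) by (field; lra). lra. }
  nra.
Qed.

Lemma lt_half r qI : 0 < r -> qI <= (/(r+1))^2 - /2 -> /2 + qI < 1.
Proof.
  intros hr h. assert (hi : 0 < /(r+1) < 1).
  { split. apply Rinv_0_lt_compat; lra. rewrite <- Rinv_1. apply Rinv_lt_contravar; lra. }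
  nra.
Qed.

Lemma div_le1 x b : 0 < x -> x <= b -> 0 < x / b <= 1.
Proof. intros. split. apply Rdiv_lt_0_compat; lra.
  assert (x / b * b = x) by (field; lra). nra. Qed.

Theorem theorem2 (pA pD pI qA qD qI : R)
  (HpA : 0 < pA < 1) (HpD : 0 < pD < 1) (HpI : 0 < pI < 1)
  (HqA : 0 < qA) (HqD : 0 < qD) (HqI : 0 <= qI) :
  let rA := pA / qA in
  let rD := pD / qD in
  let eps := eps_thr rD qI in
  let NEC := GameC_NE pA qA pD qD pI qI in
  let NED := GameD_NE pA qA pD qD pI qI in
  (* Game C *)
  ( (* (C1) *)
    (rA / pA = rD -> rD <= 1 -> qI <= (/ (rA / pA + 1)) ^ 2 - / 2 ->
       forall b, eps <= b <= 1 -> NEC (rD / b) b 1) /\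
    (* (C2) *)
    (rA / pA <= 1 -> rA / pA < rD -> qI <= (/ (rA / pA + 1)) ^ 2 - / 2 ->
       NEC (rA / pA) 1 1) /\
    (* (i) *)
    (rA = rD -> rD <= 1 -> qI > (/ (rA + 1)) ^ 2 - / 2 ->
       forall b, rD <= b <= 1 -> NEC (rD / b) b 0) /\
    (* (ii) *)
    (rA = rD -> rD <= 1 -> qI <= (/ (rA + 1)) ^ 2 - / 2 ->
       forall b, rD <= b <= eps -> NEC (rD / b) b 0) /\
    (* (iii) *)
    (rA <= 1 -> rA < rD -> qI >= (/ (rA + 1)) ^ 2 - / 2 -> NEC rA 1 0) /\
    (* (iv) *)
    (rD <= 1 -> rD < rA -> NEC 1 rD 0) /\
    (* (v) *)
    (rA > 1 -> rD > 1 -> NEC 1 1 0) ) /\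
  (* Game D *)
  ( (* (D1) *)
    (rA = rD -> rD <= 1 -> qI <= (/ (rA + 1)) ^ 2 - / 2 ->
       forall b, eps <= b <= 1 -> NED (rD / b) b 1) /\
    (* (D2) *)
    (rA <= 1 -> rA < rD -> qI <= (/ (rA + 1)) ^ 2 - / 2 -> NED rA 1 1) /\
    (* (i) *)
    (rA = rD -> rD <= 1 -> qI > (/ (rA + 1)) ^ 2 - / 2 ->
       forall b, rD <= b <= 1 -> NED (rD / b) b 0) /\
    (* (ii) *)
    (rA = rD -> rD <= 1 -> qI <= (/ (rA + 1)) ^ 2 - / 2 ->
       forall b, rD <= b <= eps -> NED (rD / b) b 0) /\
    (* (iii) *)
    (rA <= 1 -> rA < rD -> qI >= (/ (rA + 1)) ^ 2 - / 2 -> NED rA 1 0) /\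
    (* (iv) *)
    (rD <= 1 -> rD < rA -> NED 1 rD 0) /\
    (* (v) *)
    (rA > 1 -> rD > 1 -> NED 1 1 0) ).
Proof.
  intros rA rD eps NEC NED.
  assert (hrA : 0 < rA) by (apply Rdiv_lt_0_compat; lra).
  assert (hrD : 0 < rD) by (apply Rdiv_lt_0_compat; lra).
  assert (hrAp : rA / pA = / qA) by (unfold rA; field; lra).
  assert (hqArA : qA * rA = pA) by (unfold rA; field; lra).
  assert (hqDrD : qD * rD = pD) by (unfold rD; field; lra).
  assert (Ci : rA = rD -> forall b, rD <= b <= 1 -> qI >= (b/(rD/b+b))^2 - /2 ->
             NEC (rD/b) b 0 /\ NED (rD/b) b 0).
  { intros Heq b hb hI.
    assert (E : rD / b * b = rD) by (field; lra).
    apply NE0; auto; try (apply div_le1; lra); try lra.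
    - right. rewrite Rmult_assoc, E, <- Heq; lra.
    - rewrite Rmult_assoc, E, <- Heq; lra.
    - rewrite Rmult_assoc, (Rmult_comm b), E; lra.
    - right. rewrite Rmult_assoc, (Rmult_comm b), E; lra. }
  assert (Cii : rA = rD -> rD <= 1 -> qI <= (/ (rA + 1)) ^ 2 - / 2 ->
       forall b, rD <= b <= eps -> NEC (rD / b) b 0 /\ NED (rD / b) b 0).
  { intros Heq hr1 hq b hb. rewrite Heq in hq.
    assert (eps <= 1) by (apply eps_le1; auto).
    apply Ci; auto; [lra|].
    assert (hl := lt_half rD qI hrD hq).
    assert (H1 := y_high rD qI b hrD HqI hl ltac:(lra) ltac:(unfold eps in hb; lra)). lra. }
  assert (Cone : rA = rD -> rD <= 1 -> qI > (/ (rA + 1)) ^ 2 - / 2 ->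
       forall b, rD <= b <= 1 -> NEC (rD / b) b 0 /\ NED (rD / b) b 0).
  { intros Heq hr1 hq b hb. apply Ci; auto. rewrite Heq in hq.
    assert (H1 := y_le1 rD b hrD ltac:(lra)). lra. }
  assert (Ciii : rA <= 1 -> rA < rD -> qI >= (/ (rA + 1)) ^ 2 - / 2 -> NEC rA 1 0 /\ NED rA 1 0).
  { intros h1 h2 h3. apply NE0; auto; try lra.
    all: try (right; lra); try nra.
    all: try (replace (1/(rA+1)) with (/(rA+1)) by field; lra). }
  assert (Civ : rD <= 1 -> rD < rA -> NEC 1 rD 0 /\ NED 1 rD 0).
  { intros h1 h2. apply NE0; auto; try lra.
    all: try (right; lra); try nra.
    all: try (assert (0 <= rD/(1+rD) <= /2);
    [ split; [apply Rdiv_le_0_compat; lra|];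
      assert (rD/(1+rD) * (1+rD) = rD) by (field; lra); nra | nra]). }
  assert (Cv : rA > 1 -> rD > 1 -> NEC 1 1 0 /\ NED 1 1 0).
  { intros h1 h2. apply NE0; auto; try lra.
    all: try (right; lra); try nra.
    all: try (replace (1/(1+1)) with (/2) by field; nra). }
  assert (C1 : rA / pA = rD -> rD <= 1 -> qI <= (/ (rA / pA + 1)) ^ 2 - / 2 ->
       forall b, eps <= b <= 1 -> NEC (rD / b) b 1).
  { intros Heq hr1 hq b hb. rewrite Heq in hq.
    assert (hl := lt_half rD qI hrD hq).
    assert (he := eps_facts rD qI hrD HqI hl).
    assert (H1 := y_low rD qI b hrD HqI hl ltac:(unfold eps in hb; lra) ltac:(unfold eps in hb; lra)).
    assert (hbr := b_gt rD qI b ltac:(lra) HqI ltac:(unfold eps in hb; lra) H1).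
    assert (E : rD / b * b = rD) by (field; lra).
    assert (hq1 : qA * rD = 1) by (rewrite <- Heq, hrAp; field; lra).
    apply NEC1; auto; try (apply div_le1; lra); try lra.
    - rewrite Rmult_assoc, E; lra.
    - right. rewrite Rmult_assoc, E; lra.
    - rewrite Rmult_assoc, (Rmult_comm b), E; lra.
    - right. rewrite Rmult_assoc, (Rmult_comm b), E; lra. }
  assert (D1 : rA = rD -> rD <= 1 -> qI <= (/ (rA + 1)) ^ 2 - / 2 ->
       forall b, eps <= b <= 1 -> NED (rD / b) b 1).
  { intros Heq hr1 hq b hb. rewrite Heq in hq.
    assert (hl := lt_half rD qI hrD hq).
    assert (he := eps_facts rD qI hrD HqI hl).
    assert (H1 := y_low rD qI b hrD HqI hl ltac:(unfold eps in hb; lra) ltac:(unfold eps in hb; lra)).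
    assert (hbr := b_gt rD qI b ltac:(lra) HqI ltac:(unfold eps in hb; lra) H1).
    assert (E : rD / b * b = rD) by (field; lra).
    apply NED1; auto; try (apply div_le1; lra); try lra.
    - rewrite Rmult_assoc, E, <- Heq; lra.
    - right. rewrite Rmult_assoc, E, <- Heq; lra.
    - rewrite Rmult_assoc, (Rmult_comm b), E; lra.
    - right. rewrite Rmult_assoc, (Rmult_comm b), E; lra. }
  assert (C2 : rA / pA <= 1 -> rA / pA < rD -> qI <= (/ (rA / pA + 1)) ^ 2 - / 2 ->
       NEC (rA / pA) 1 1).
  { intros h1 h2 h3. rewrite hrAp in *.
    assert (0 < / qA) by (apply Rinv_0_lt_compat; lra).
    assert (qA * / qA = 1) by (field; lra).
    apply NEC1; auto; try lra.
    all: try (right; lra); try nra.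
    all: try (replace (1/(/qA+1)) with (/(/qA+1)) by (field; split; lra); lra). }
  assert (D2 : rA <= 1 -> rA < rD -> qI <= (/ (rA + 1)) ^ 2 - / 2 -> NED rA 1 1).
  { intros h1 h2 h3. apply NED1; auto; try lra.
    all: try (right; lra); try nra.
    all: try (replace (1/(rA+1)) with (/(rA+1)) by field; lra). }
  split.
  - refine (conj C1 (conj C2 (conj _ (conj _ (conj _ (conj _ _)))))).
    + intros h1 h2 h3 b hb; exact (proj1 (Cone h1 h2 h3 b hb)).
    + intros h1 h2 h3 b hb; exact (proj1 (Cii h1 h2 h3 b hb)).
    + intros h1 h2 h3; exact (proj1 (Ciii h1 h2 h3)).
    + intros h1 h2; exact (proj1 (Civ h1 h2)).
    + intros h1 h2; exact (proj1 (Cv h1 h2)).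
  - refine (conj D1 (conj D2 (conj _ (conj _ (conj _ (conj _ _)))))).
    + intros h1 h2 h3 b hb; exact (proj2 (Cone h1 h2 h3 b hb)).
    + intros h1 h2 h3 b hb; exact (proj2 (Cii h1 h2 h3 b hb)).
    + intros h1 h2 h3; exact (proj2 (Ciii h1 h2 h3)).
    + intros h1 h2; exact (proj2 (Civ h1 h2)).
    + intros h1 h2; exact (proj2 (Cv h1 h2)).
Qed.
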